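(* Let $\mathcal L:\mathcal Y\times\mathbb R^d\to\mathbb R$ be continuously differentiable and $\mu$-strongly convex. Let $Q$ be a probability distribution over functions $g:\mathcal X\to\mathbb R^d$, fix $k\ge1$, and let $G=\{g_1,\dots,g_k\}\sim Q^k$ and $G'=\{g'_1,\dots,g'_k\}\sim Q^k$ be independent. Define \[ f_1=\arg\min_{f\in V(G)}\mathbb E[\mathcal L(y,f(x))],\qquad f_2=\arg\min_{f\in V(G')}\mathbb E[\mathcal L(y,f(x))]. \] Then \[ \mathbb E_{f_1,f_2}[D(f_1,f_2)]\le\frac8\mu\big(\bar R_k-\bar R_{2k}\big). \]
   Context: $P$ is a distribution on $\mathcal X\times\mathcal Y$; expectations are over $(x,y)\sim P$ unless indicated. $\mathcal L$ is $\mu$-strongly convex ($\mu>0$) if for all $y\in\mathcal Y$ and $P_1,P_2\in\mathbb R^d$: $\mathcal L(y,P_1)\ge\mathcal L(y,P_2)+\langle\nabla_p\mathcal L(y,P_2),P_1-P_2\rangle+\frac\mu2\|P_1-P_2\|_2^2$. For $f:\mathcal X\to\mathbb R^d$, $R(f)=\mathbb E[\mathcal L(y,f(x))]$, and $D(f_1,f_2)=\mathbb E[\|f_1(x)-f_2(x)\|_2^2]$. For a finite multiset $G$ of functions $\mathcal X\to\mathbb R^d$, $V(G)$ is their linear span (real coefficients) and $R(G)=\min_{f\in V(G)}R(f)$ (minimizers assumed to exist). $\bar R_t=\mathbb E[R(\{g_1,\dots,g_t\})]$ with $g_1,\dots,g_t$ i.i.d. from $Q$. The outer expectation in the conclusion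 is over $G,G'$. *)

(* Defs.v *)
From HB Require Import structures.
From mathcomp Require Import all_boot all_order all_algebra.
From mathcomp Require Import all_classical all_reals all_analysis.
From mathcomp Require Import measurable_realfun.
Set Implicit Arguments. Unset Strict Implicit. Unset Printing Implicit Defensive.
Import Order.TTheory GRing.Theory Num.Theory.
Import numFieldNormedType.Exports.
Local Open Scope classical_set_scope.
Local Open Scope ring_scope.

Section Defs.
Context {R : realType}.

Definition sqnorm (d : nat) (v : 'rV[R]_d) : R := \sum_(i < d) (v 0 i) ^+ 2.

(* mu-strong convexity of L in its second argument, with the gradient pairing
   <grad_p L(y,P2), P1 - P2> written as the differential 'd (L y) P2 (P1 - P2) *)
Definition strongly_convex (Y : Type) (d : nat) (mu : R) (L : Y -> 'rV[R]_d -> R) :=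
  forall (y : Y) (P1 P2 : 'rV[R]_d),
    L y P2 + 'd (L y) P2 (P1 - P2) + mu / 2 * sqnorm (P1 - P2) <= L y P1.

Definition Vspan (X : Type) (d t : nat) (G : 'I_t -> X -> 'rV[R]_d) : set (X -> 'rV[R]_d) :=
  [set f | exists c : 'I_t -> R, f = (fun x => \sum_(i < t) c i *: G i x)].

Section Risk.
Context {dX dY : measure_display} {X : measurableType dX} {Y : measurableType dY}.
Variable P : probability (X * Y)%type R.
Context {d : nat}.
Variable L : Y -> 'rV[R]_d -> R.

Definition Risk (f : X -> 'rV[R]_d) : \bar R :=
  (\int[P]_z (L z.2 (f z.1))%:E)%E.

Definition Dist (f1 f2 : X -> 'rV[R]_d) : \bar R :=
  (\int[P]_z (sqnorm (f1 z.1 - f2 z.1))%:E)%E.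

(* R(G) = min_{f in V(G)} R(f)  (as an infimum; minimizers are assumed to exist) *)
Definition minRisk (t : nat) (G : 'I_t -> X -> 'rV[R]_d) : \bar R :=
  ereal_inf [set Risk f | f in Vspan G].
End Risk.

Definition mutually_independent {dO dT : measure_display} {O : measurableType dO}
    {T : measurableType dT} (Pr : probability O R) (xi : nat -> O -> T) :=
  forall (I : seq nat) (A : nat -> set T), uniq I ->
    (forall i, measurable (A i)) ->
    Pr (\bigcap_(i in [set` I]) (xi i @^-1` A i)) = (\prod_(i <- I) Pr (xi i @^-1` A i))%E.

Definition iid {dO dT : measure_display} {O : measurableType dO}
    {T : measurableType dT} (Pr : probability O R) (Q : probability T R) (xi : nat -> O -> T) :=
  [/\ forall i, measurable_fun setT (xi i),
      forall i A, measurable A -> Pr (xi i @^-1` A) = Q A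
    & mutually_independent Pr xi].

(* \bar R_t = E[ R({g_1,...,g_t}) ] where g_i = gfun (xi i) and xi_0, xi_1, ... are
   i.i.d. with law Q on the probability space (O, Pr) *)
Definition avgMinRisk {dX dY dO dT : measure_display} {X : measurableType dX}
    {Y : measurableType dY} {O : measurableType dO} {T : measurableType dT}
    (P : probability (X * Y)%type R) {d : nat} (L : Y -> 'rV[R]_d -> R)
    (gfun : T -> X -> 'rV[R]_d) (Pr : probability O R) (xi : nat -> O -> T) (t : nat) : \bar R :=
  (\int[Pr]_w minRisk P L (fun i : 'I_t => gfun (xi i w)))%E.

End Defs.

(* Main.v *)
Require Import Defs.
From HB Require Import structures.
From mathcomp Require Import all_boot all_order all_algebra.
From mathcomp Require Import all_classical all_reals all_analysis.
From mathcomp Require Import measurable_realfun.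
Import Order.TTheory GRing.Theory Num.Theory.
Import numFieldNormedType.Exports.
Local Open Scope classical_set_scope.
Local Open Scope ring_scope.
From mathcomp Require Import ring lra.

Section Alg.
Context {R : realType} {d : nat}.
Implicit Types (a b c v : 'rV[R]_d).

Lemma sqnorm_ge0 v : 0 <= sqnorm v.
Proof. by apply: sumr_ge0 => i _; exact: sqr_ge0. Qed.

Lemma sqnorm_tri a b c : sqnorm (a - b) <= 2 * sqnorm (a - c) + 2 * sqnorm (b - c).
Proof.
rewrite /sqnorm !mulr_sumr -big_split /=; apply: ler_sum => i _.
rewrite !mxE; set x := a 0 i; set y := b 0 i; set z := c 0 i.
have := sqr_ge0 (x + y - 2 * z); rewrite !expr2 => ?; nra.
Qed.

Lemma sqnorm_comb (t : R) a b :
  t * sqnorm (a - (b + t *: (a - b))) + (1 - t) * sqnorm (b - (b + t *: (a - b)))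
  = t * (1 - t) * sqnorm (a - b).
Proof.
rewrite /sqnorm !mulr_sumr -big_split /=; apply: eq_bigr => i _.
rewrite !mxE; ring.
Qed.

Lemma sc_comb (mu : R) (Y : Type) (L : Y -> 'rV[R]_d -> R) y (t : R) a b :
  strongly_convex mu L -> 0 <= t <= 1 ->
  L y (b + t *: (a - b)) + mu / 2 * (t * (1 - t)) * sqnorm (a - b)
    <= t * L y a + (1 - t) * L y b.
Proof.
move=> sc /andP[t0 t1].
set z := b + t *: (a - b).
have h1 := sc y a z; have h2 := sc y b z.
have ea : a - z = (1 - t) *: (a - b).
  by rewrite /z scalerBl scale1r; apply/rowP => i; rewrite !mxE; ring.
have eb : b - z = (- t) *: (a - b).
  by rewrite /z; apply/rowP => i; rewrite !mxE; ring.
have := sqnorm_comb t a b; rewrite -/z => hc.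
move: h1 h2; rewrite ea eb !linearZ /=.
set D := 'd (L y) z (a - b).
rewrite -ea -eb => h1 h2.
have e : t * (L y z + (1 - t) * D + mu / 2 * sqnorm (a - z)) +
   (1 - t) * (L y z + - t * D + mu / 2 * sqnorm (b - z)) =
   L y z + mu / 2 * (t * sqnorm (a - z) + (1 - t) * sqnorm (b - z)) by ring.
rewrite hc in e.
have t1' : 0 <= 1 - t by lra.
have := lerD (ler_wpM2l t0 h1) (ler_wpM2l t1' h2).
rewrite e; lra.
Qed.
End Alg.
Section VS.
Context {R : realType} {d : nat} {X : Type}.

Lemma Vspan_comb t (G : 'I_t -> X -> 'rV[R]_d) f g (s : R) :
  Vspan G f -> Vspan G g -> Vspan G (fun x => g x + s *: (f x - g x)).
Proof.
move=> [cf ->] [cg ->]; exists (fun i => cg i + s * (cf i - cg i)).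
apply: funext => x; rewrite scalerBr !scaler_sumr -sumrB -big_split /=.
apply: eq_bigr => i _.
by rewrite !scalerA scalerDl mulrBr scalerBl.
Qed.

Lemma Vspan_left k (F : nat -> X -> 'rV[R]_d) f :
  Vspan (fun i : 'I_k => F i) f -> Vspan (fun i : 'I_(k + k) => F i) f.
Proof.
move=> [c ->]; exists (fun i : 'I_(k + k) => match @fintype.split k k i with inl j => c j | inr _ => 0 end).
apply: funext => x; rewrite big_split_ord /=.
rewrite [X in _ = _ + X]big1 ?addr0; last first.
  by move=> i _; rewrite -[rshift k i]/(unsplit (inr i)) unsplitK scale0r.
by apply: eq_bigr => i _ /=; rewrite -[lshift k i]/(unsplit (inl i)) unsplitK.
Qed.

Lemma Vspan_right k (F : nat -> X -> 'rV[R]_d) f :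
  Vspan (fun i : 'I_k => F (k + i)%N) f -> Vspan (fun i : 'I_(k + k) => F i) f.
Proof.
move=> [c ->]; exists (fun i : 'I_(k + k) => match @fintype.split k k i with inr j => c j | inl _ => 0 end).
apply: funext => x; rewrite big_split_ord /=.
rewrite [X in _ = X + _]big1 ?add0r; last first.
  by move=> i _; rewrite -[lshift k i]/(unsplit (inl i)) unsplitK scale0r.
by apply: eq_bigr => i _ /=; rewrite -[rshift k i]/(unsplit (inr i)) unsplitK.
Qed.
End VS.
Local Open Scope ereal_scope.
Lemma le_int_nm (R : realType) d (T : measurableType d) (mu : {measure set T -> \bar R}) (f g : T -> \bar R) :
  (forall x, 0 <= f x) -> (forall x, f x <= g x) -> \int[mu]_x f x <= \int[mu]_x g x.
Proof.
move=> f0 fg; rewrite !ge0_integralTE //; last by move=> x; exact: le_trans (f0 x) (fg x).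
apply: le_ereal_sup => _ [h hf <-]; exists h => //= x; exact: le_trans (hf x) (fg x).
Qed.
Local Close Scope ereal_scope.
Lemma int_lin (R : realType) d (T : measurableType d) (mu : {measure set T -> \bar R})
  (h1 h2 : T -> R) (a b r1 r2 : R) :
  mu.-integrable setT (fun x => (h1 x)%:E) -> mu.-integrable setT (fun x => (h2 x)%:E) ->
  (\int[mu]_x (h1 x)%:E = r1%:E)%E -> (\int[mu]_x (h2 x)%:E = r2%:E)%E ->
  mu.-integrable setT (fun x => (a * h1 x + b * h2 x)%:E) /\
  (\int[mu]_x (a * h1 x + b * h2 x)%:E = (a * r1 + b * r2)%:E)%E.
Proof.
move=> i1 i2 e1 e2.
have -> : (fun x => (a * h1 x + b * h2 x)%:E) =
   ((fun x => a%:E * (h1 x)%:E) \+ (fun x => b%:E * (h2 x)%:E))%E.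
  by apply: funext => x; rewrite /= EFinD !EFinM.
split; first by apply: integrableD => //; apply: integrableZl.
rewrite integralD //; try by apply: integrableZl.
by rewrite !integralZl // e1 e2 -!EFinM -EFinD.
Qed.

Lemma lim_lemma (R : realType) (D M : R) : 0 <= M ->
  (forall t, 0 < t < 1 -> D * (1 - t) <= M) -> D <= M.
Proof.
move=> M0 h; rewrite leNgt; apply/negP => MD.
have D0 : 0 < D by exact: le_lt_trans M0 MD.
have := h ((D - M) / (2 * D)).
have e : D * (1 - (D - M) / (2 * D)) = (D + M) / 2.
  by field; rewrite gt_eqF.
rewrite e.
have t0 : 0 < (D - M) / (2 * D) by apply: divr_gt0; lra.
have t1 : (D - M) / (2 * D) < 1 by rewrite ltr_pdivrMr; lra.
by rewrite t0 t1 => /(_ isT); lra.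
Qed.

Lemma key (R : realType) (dX dY : measure_display) (X : measurableType dX) (Y : measurableType dY)
  (P : probability (X * Y)%type R) (d : nat) (L : Y -> 'rV[R]_d -> R) (mu : R)
  (t : nat) (G3 : 'I_t -> X -> 'rV[R]_d) (f1 f2 f3 : X -> 'rV[R]_d) :
  0 < mu -> strongly_convex mu L ->
  (forall f, Vspan G3 f -> P.-integrable setT (fun z => (L z.2 (f z.1))%:E)) ->
  Vspan G3 f1 -> Vspan G3 f2 -> Vspan G3 f3 ->
  Risk P L f3 = minRisk P L G3 ->
  (Dist P f1 f2 <= ((4 / mu) * (fine (Risk P L f1) + fine (Risk P L f2)
                     - 2 * fine (Risk P L f3)))%:E)%E.
Proof.
move=> mu0 sc hint V1 V2 V3 e3.
have fin f : Vspan G3 f -> Risk P L f = (fine (Risk P L f))%:E.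
  by move=> Vf; rewrite fineK //; apply: integrable_fin_num => //; exact: hint.
have low f : Vspan G3 f -> fine (Risk P L f3) <= fine (Risk P L f).
  move=> Vf; rewrite -lee_fin -fin // -fin // e3.
  by apply: ereal_inf_lbound; exists f.
set r1 := fine (Risk P L f1); set r2 := fine (Risk P L f2); set r3 := fine (Risk P L f3).
set M := 4 / mu * (r1 + r2 - 2 * r3).
have M0 : 0 <= M.
  have := low _ V1; have := low _ V2; rewrite -/r1 -/r2 -/r3 => ? ?.
  apply: mulr_ge0; [apply: divr_ge0 => //; lra| lra].
have main tt : 0 < tt < 1 -> (Dist P f1 f2 <= ((2 / (mu / 2 * (tt * (1 - tt)))) * (tt * (r1 + r2 - 2 * r3)))%:E)%E.
  case/andP => t0 t1.
  set z1 := fun x => f3 x + tt *: (f1 x - f3 x).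
  set z2 := fun x => f3 x + tt *: (f2 x - f3 x).
  have Vz1 : Vspan G3 z1 by exact: Vspan_comb.
  have Vz2 : Vspan G3 z2 by exact: Vspan_comb.
  set c := mu / 2 * (tt * (1 - tt)).
  have c0 : 0 < c by apply: mulr_gt0; [apply: divr_gt0 => //; lra | apply: mulr_gt0; lra].
  set g := fun z : X * Y => 2 / c * (1 * (1 * (1 * (tt * L z.2 (f1 z.1) + tt * L z.2 (f2 z.1))
       + (2 * (1 - tt)) * L z.2 (f3 z.1)) + (-1) * L z.2 (z1 z.1)) + (-1) * L z.2 (z2 z.1))
       + 0 * L z.2 (z2 z.1).
  have ptw z : sqnorm (f1 z.1 - f2 z.1) <= g z.
    rewrite /g.
    have tt01 : 0 <= tt <= 1 by apply/andP; split; lra.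
    have h1 : L z.2 (z1 z.1) + c * sqnorm (f1 z.1 - f3 z.1) <= tt * L z.2 (f1 z.1) + (1 - tt) * L z.2 (f3 z.1).
      exact: (@sc_comb _ _ mu _ L z.2 tt (f1 z.1) (f3 z.1) sc tt01).
    have h2 : L z.2 (z2 z.1) + c * sqnorm (f2 z.1 - f3 z.1) <= tt * L z.2 (f2 z.1) + (1 - tt) * L z.2 (f3 z.1).
      exact: (@sc_comb _ _ mu _ L z.2 tt (f2 z.1) (f3 z.1) sc tt01).
    have h3 : sqnorm (f1 z.1 - f2 z.1) <= 2 * sqnorm (f1 z.1 - f3 z.1) + 2 * sqnorm (f2 z.1 - f3 z.1).
      exact: sqnorm_tri.
    move: h1 h2 h3; rewrite mul0r addr0.
    move: (sqnorm (f1 z.1 - f2 z.1)) (sqnorm (f1 z.1 - f3 z.1)) (sqnorm (f2 z.1 - f3 z.1)) => s12 s13 s23.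
    move: (L z.2 (z1 z.1)) (L z.2 (z2 z.1)) (L z.2 (f1 z.1)) (L z.2 (f2 z.1)) (L z.2 (f3 z.1)) => a b e1 e2 e33 h1 h2 h3.
    have : c * s12 <= 2 * (c * s13) + 2 * (c * s23).
      have := ler_wpM2l (ltW c0) h3; lra.
    rewrite -ler_pdivlMl // => h4; apply: (le_trans h4).
    have -> : c^-1 * (2 * (c * s13) + 2 * (c * s23)) = 2 / c * (c * s13 + c * s23) by ring.
    apply: ler_wpM2l; first by apply: divr_ge0 => //; exact: ltW.
    lra.
  have ef f : Vspan G3 f -> (\int[P]_z (L z.2 (f z.1))%:E = (fine (Risk P L f))%:E)%E.
    by move=> Vf; rewrite -fin.
  have [iA eA] := @int_lin _ _ _ _ _ _ tt tt _ _ (hint _ V1) (hint _ V2) (ef _ V1) (ef _ V2).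
  have [iB eB] := @int_lin _ _ _ _ _ _ 1 (2 * (1 - tt)) _ _ iA (hint _ V3) eA (ef _ V3).
  have [iC eC] := @int_lin _ _ _ _ _ _ 1 (-1) _ _ iB (hint _ Vz1) eB (ef _ Vz1).
  have [iD eD] := @int_lin _ _ _ _ _ _ 1 (-1) _ _ iC (hint _ Vz2) eC (ef _ Vz2).
  have [_ eE] := @int_lin _ _ _ _ _ _ (2 / c) 0 _ _ iD (hint _ Vz2) eD (ef _ Vz2).
  have eG : (\int[P]_z (g z)%:E = (2 / c * (1 * (1 * (1 * (tt * r1 + tt * r2) + 2 * (1 - tt) * r3) + -1 * fine (Risk P L z1)) + -1 * fine (Risk P L z2)) + 0 * fine (Risk P L z2))%:E)%E := eE.
  apply: (@le_trans _ _ (\int[P]_z (g z)%:E)%E).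
    by apply: le_int_nm => z; rewrite lee_fin ?sqnorm_ge0 ?ptw.
  rewrite eG lee_fin mul0r addr0; apply: ler_wpM2l; first by apply: divr_ge0 => //; exact: ltW.
  have := low _ Vz1; have := low _ Vz2; rewrite -/r3; lra.
have D0 : (0 <= Dist P f1 f2)%E by apply: integral_ge0 => z _; rewrite lee_fin sqnorm_ge0.
have Dfin : Dist P f1 f2 \is a fin_num.
  have h : 0 < (2^-1 : R) < 1 by apply/andP; split; [rewrite invr_gt0 | rewrite invf_lt1]; lra.
  rewrite ge0_fin_numE //; apply: le_lt_trans (main _ h) _; exact: ltry.
rewrite -(fineK Dfin) lee_fin; apply: lim_lemma => // tt /[dup] h /andP[t0 t1].
have := main _ h; rewrite -(fineK Dfin) lee_fin => hD.
have t1' : 0 <= 1 - tt by lra.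
apply: le_trans (ler_wpM2r t1' hD) _.
rewrite /M le_eqVlt; apply/orP; left; apply/eqP; field.
by apply/and3P; split; rewrite ?gt_eqF //; lra.
Qed.
Section Law.
Context {R : realType} {dO dT : measure_display} {O : measurableType dO} {T : measurableType dT}.
Variables (Pr : probability O R) (Q : probability T R) (xi : nat -> O -> T).
Hypothesis hiid : iid Pr Q xi.
Variable k : nat.

Definition phi (s : nat) (w : O) : k.-tuple T := [tuple xi (s + i)%N w | i < k].

Lemma phi_meas s : measurable_fun setT (phi s).
Proof.
apply/measurable_fun_tnthP => i.
have -> : (@tnth k T ^~ i \o phi s) = xi (s + i)%N by apply: funext => w; rewrite /= tnth_mktuple.
by case: hiid.
Qed.

Definition rect (B : 'I_k -> set T) : set (k.-tuple T) := [set x : k.-tuple T | forall i : 'I_k, B i (@tnth k T x i)].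

Lemma phi_rect s (B : 'I_k -> set T) : (forall i, measurable (B i)) ->
  Pr (phi s @^-1` rect B) = (\prod_(i < k) Q (B i))%E.
Proof.
move=> mB; case: hiid => mxi lawxi ind.
pose A j := if (s <= j)%N then oapp B setT (insub (j - s)%N : option 'I_k) else setT.
have mA j : measurable (A j).
  by rewrite /A; case: ifP => // _; case: insubP => //=.
have As (i : 'I_k) : A (s + i)%N = B i by rewrite /A leq_addr addKn valK.
have -> : phi s @^-1` rect B = \bigcap_(j in [set` iota s k]) (xi j @^-1` A j).
  apply/seteqP; split => w /=.
  - move=> hw j /=; rewrite mem_iota => /andP[sj _]; rewrite /A sj.
    case: insubP => //= i _ vi; have := hw i; rewrite /phi tnth_mktuple vi subnKC //.
  - move=> hw i; rewrite /phi tnth_mktuple -As; apply: hw => /=.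
    by rewrite mem_iota leq_addr ltn_add2l ltn_ord.
rewrite ind //; last exact: iota_uniq.
rewrite (_ : iota s k = map (addn s) (iota 0 k)); last by rewrite -iotaDl addn0.
rewrite big_map (_ : iota 0 k = index_iota 0 k) ?big_mkord; last by rewrite /index_iota subn0.
by apply: eq_bigr => i _; rewrite lawxi // As.
Qed.

Lemma rect_meas (B : 'I_k -> set T) : (forall i, measurable (B i)) -> measurable (rect B).
Proof.
move=> mB.
have -> : rect B = \bigcap_(i in [set: 'I_k]) (@tnth k T ^~ i @^-1` B i).
  by apply/seteqP; split => x /= h i; [move=> _; apply: h | apply: h].
apply: fin_bigcap_measurable; first exact: finite_finset.
move=> i _; rewrite -[X in measurable X]setTI; exact: measurable_tnth.
Qed.

Definition Grect : set (set (k.-tuple T)) :=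
  [set A | exists2 B : 'I_k -> set T, (forall i, measurable (B i)) & A = rect B].

Lemma mGrect : measurable = <<s Grect >>.
Proof.
apply/seteqP; split; last first.
  apply: smallest_sub; first exact: sigma_algebra_measurable.
  by move=> _ [B mB ->]; exact: rect_meas.
change (g_sigma_preimage (fun i (x : k.-tuple T) => @tnth k T x i) `<=` <<s Grect >>).
apply: smallest_sub; first exact: smallest_sigma_algebra.
apply: (big_ind (fun S => S `<=` <<s Grect >>)).
- by [].
- by move=> A B hA hB C [/hA|/hB].
- move=> i _ _ [C mC <-]; apply: sub_sigma_algebra.
  exists (fun j => if j == i then C else setT).
    by move=> j; case: ifP.
  apply/seteqP; split => x /=.
  + by move=> [_ h] j; case: eqP => // ->.
  + by move=> h; split => //; have := h i; rewrite eqxx.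
Qed.

Lemma push_eq s1 s2 A : measurable A -> Pr (phi s1 @^-1` A) = Pr (phi s2 @^-1` A).
Proof.
move=> mA.
have m1 := phi_meas s1; have m2 := phi_meas s2.
apply: (@measure_unique _ _ _ Grect (fun _ => setT) mGrect _ _ _
  (pushforward Pr (phi s1)) (pushforward Pr (phi s2))) => //.
- move=> _ _ [B1 mB1 ->] [B2 mB2 ->]; exists (fun i => B1 i `&` B2 i).
    by move=> i; apply: measurableI.
  by apply/seteqP; split => x /=; [move=> [h1 h2] i; split | move=> h; split => i; case: (h i)].
- by move=> _; exists (fun _ => setT) => //; apply/seteqP; split.
- by rewrite bigcup_const.
- move=> _ [B mB ->]; change (Pr (phi s1 @^-1` rect B) = Pr (phi s2 @^-1` rect B)); by rewrite !phi_rect.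
- by move=> _; change (Pr (phi s1 @^-1` setT) < +oo)%E; rewrite preimage_setT probability_setT ltry.
Qed.

Lemma int_eq s1 s2 (F : k.-tuple T -> \bar R) : measurable_fun setT F ->
  Pr.-integrable setT (fun w => F (phi s1 w)) ->
  Pr.-integrable setT (fun w => F (phi s2 w)) /\
  (\int[Pr]_w F (phi s1 w) = \int[Pr]_w F (phi s2 w))%E.
Proof.
move=> mF i1.
have m1 := phi_meas s1; have m2 := phi_meas s2.
have eqm A : measurable A -> A `<=` setT -> pushforward Pr (phi s1) A = pushforward Pr (phi s2) A.
  by move=> mA _; exact: push_eq.
have eabs : (\int[Pr]_w `|F (phi s1 w)| = \int[Pr]_w `|F (phi s2 w)|)%E.
  have h1 := @ge0_integral_pushforward _ _ _ _ _ _ m1 Pr setT (fun y => `|F y|)%E measurableT (measurableT_comp (@abse_measurable R setT) mF) (fun _ _ => abse_ge0 _).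
  have h2 := @ge0_integral_pushforward _ _ _ _ _ _ m2 Pr setT (fun y => `|F y|)%E measurableT (measurableT_comp (@abse_measurable R setT) mF) (fun _ _ => abse_ge0 _).
  rewrite preimage_setT in h1; rewrite preimage_setT in h2.
  apply: (etrans (esym h1)); apply: (etrans _ h2).
  exact: eq_measure_integral.
have i2 : Pr.-integrable setT (fun w => F (phi s2 w)).
  apply/integrableP; split; first exact: measurableT_comp.
  rewrite -eabs; by case/integrableP: i1.
split => //.
have h1 := @integral_pushforward _ _ _ _ _ _ m1 Pr setT F mF.
have h2 := @integral_pushforward _ _ _ _ _ _ m2 Pr setT F mF.
rewrite preimage_setT in h1; rewrite preimage_setT in h2.
apply: (etrans (esym (h1 _ _))); rewrite ?preimage_setT //.
apply: (etrans _ (h2 _ _)); rewrite ?preimage_setT //.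
exact: eq_measure_integral.
Qed.
End Law.

Theorem theorem5 (R : realType)
    (dX dY : measure_display) (X : measurableType dX) (Y : measurableType dY)
    (P : probability (X * Y)%type R)
    (d : nat) (L : Y -> 'rV[R]_d -> R) (mu : R)
    (dT : measure_display) (T : measurableType dT) (gfun : T -> X -> 'rV[R]_d)
    (Q : probability T R)
    (dO : measure_display) (O : measurableType dO) (Pr : probability O R)
    (xi : nat -> O -> T)
    (argmin : forall t : nat, ('I_t -> T) -> X -> 'rV[R]_d)
    (k : nat) :
  (* L is continuously differentiable in its second argument *)
  (forall (y : Y) (p : 'rV[R]_d), differentiable (L y) p) ->
  (forall (y : Y) (h : 'rV[R]_d), continuous (fun p => 'd (L y) p h)) ->
  (* L is mu-strongly convex, mu > 0 *)
  0 < mu -> strongly_convex mu L ->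
  (* regularity: the functions g are measurable, and R(f) is a well-defined
     (finite) expectation for every f in a Vspan V(G) *)
  (forall (tau : T) (i : 'I_d), measurable_fun setT (fun x => gfun tau x 0 i)) ->
  (forall (t : nat) (G : 'I_t -> T) (f : X -> 'rV[R]_d),
      Vspan (fun i => gfun (G i)) f ->
      P.-integrable setT (fun z => (L z.2 (f z.1))%:E)) ->
  (* minimizers exist: argmin t G is a minimizer of R over V(G) *)
  (forall (t : nat) (G : 'I_t -> T),
      Vspan (fun i => gfun (G i)) (argmin t G) /\
      Risk P L (argmin t G) = minRisk P L (fun i => gfun (G i))) ->
  (* G |-> R(G) is measurable, and \bar R_k, \bar R_{2k} are finite *)
  (forall t : nat, measurable_fun setT
      (fun tau : t.-tuple T => minRisk P L (fun i => gfun (tnth tau i)))) ->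
  Pr.-integrable setT (fun w => minRisk P L (fun i : 'I_k => gfun (xi i w))) ->
  Pr.-integrable setT (fun w => minRisk P L (fun i : 'I_(k + k) => gfun (xi i w))) ->
  (* sampling: xi_0, xi_1, ... i.i.d. with law Q; G = (g_1..g_k) = (xi_0..xi_{k-1}),
     G' = (g'_1..g'_k) = (xi_k..xi_{2k-1}) *)
  iid Pr Q xi ->
  (1 <= k)%N ->
  (\int[Pr]_w Dist P (argmin k (fun i => xi i w)) (argmin k (fun i => xi (k + i)%N w))
     <= (8 / mu)%:E * (avgMinRisk P L gfun Pr xi k - avgMinRisk P L gfun Pr xi (k + k)))%E.
Proof.
move=> hdiff hcont mu0 sc mg hint hmin hmeas iRk iR2k hiid k1.
set R1 := fun w => minRisk P L (fun i : 'I_k => gfun (xi i w)).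
set R2 := fun w => minRisk P L (fun i : 'I_k => gfun (xi (k + i)%N w)).
set R3 := fun w => minRisk P L (fun i : 'I_(k + k) => gfun (xi i w)).
have finR t (G : 'I_t -> T) : minRisk P L (fun i => gfun (G i)) \is a fin_num.
  rewrite -(hmin t G).2; apply: integrable_fin_num => //; apply: hint; exact: (hmin t G).1.
have ptw w : (Dist P (argmin k (fun i => xi i w)) (argmin k (fun i => xi (k + i)%N w))
   <= (4 / mu)%:E * ((R1 w - R3 w) + (R2 w - R3 w)))%E.
  have [V1 e1] := hmin k (fun i => xi i w).
  have [V2 e2] := hmin k (fun i => xi (k + i)%N w).
  have [V3 e3] := hmin (k + k) (fun i => xi i w).
  have := @key R dX dY X Y P d L mu (k + k) (fun i => gfun (xi i w)) _ _ _ mu0 sc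
    (fun f Vf => hint (k + k) (fun i => xi i w) f Vf)
    (@Vspan_left _ _ _ k (fun j => gfun (xi j w)) _ V1)
    (@Vspan_right _ _ _ k (fun j => gfun (xi j w)) _ V2) V3 e3.
  rewrite e1 e2 e3 -/(R1 w) -/(R2 w) -/(R3 w).
  have f1 : R1 w \is a fin_num := finR _ (fun i : 'I_k => xi i w).
  have f2 : R2 w \is a fin_num := finR _ (fun i : 'I_k => xi (k + i)%N w).
  have f3 : R3 w \is a fin_num := finR _ (fun i : 'I_(k + k) => xi i w).
  move=> h; apply: (le_trans h).
  rewrite -(fineK f1) -(fineK f2) -(fineK f3) -!EFinB -EFinD -EFinM lee_fin !fineK //.
  by rewrite le_eqVlt; apply/orP; left; apply/eqP; congr (_ * _); ring.
pose F := fun tau : k.-tuple T => minRisk P L (fun i => gfun (tnth tau i)).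
have eF s : (fun w => F (phi xi k s w)) = (fun w => minRisk P L (fun i : 'I_k => gfun (xi (s + i)%N w))).
  apply: funext => w; rewrite /F; congr (minRisk P L _); apply: funext => i.
  by rewrite /phi tnth_mktuple.
have i1 : Pr.-integrable setT (fun w => F (phi xi k 0 w)) by rewrite eF; exact: iRk.
have [i2 e12] := int_eq Pr Q xi hiid k 0 k F (hmeas k) i1.
rewrite !eF in i2 e12.
have iR2 : Pr.-integrable setT R2 := i2.
have eR12 : (\int[Pr]_w R1 w = \int[Pr]_w R2 w)%E := e12.
have A1 : avgMinRisk P L gfun Pr xi k = (\int[Pr]_w R1 w)%E := erefl.
have A3 : avgMinRisk P L gfun Pr xi (k + k) = (\int[Pr]_w R3 w)%E := erefl.
have iR1 : Pr.-integrable setT R1 := iRk.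
have iR3 : Pr.-integrable setT R3 := iR2k.
rewrite A1 A3.
have iB1 : Pr.-integrable setT (R1 \- R3)%E by exact: integrableB.
have iB2 : Pr.-integrable setT (R2 \- R3)%E by exact: integrableB.
have iS : Pr.-integrable setT ((R1 \- R3) \+ (R2 \- R3))%E by exact: integrableD.
have eI : (\int[Pr]_w ((4 / mu)%:E * ((R1 w - R3 w) + (R2 w - R3 w))) =
   (4 / mu)%:E * \int[Pr]_w ((R1 w - R3 w) + (R2 w - R3 w)))%E by apply: integralZl.
have eD : (\int[Pr]_w ((R1 w - R3 w) + (R2 w - R3 w)) =
   \int[Pr]_w (R1 w - R3 w) + \int[Pr]_w (R2 w - R3 w))%E by apply: integralD.
have eB1 : (\int[Pr]_w (R1 w - R3 w) = \int[Pr]_w R1 w - \int[Pr]_w R3 w)%E by apply: integralB.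
have eB2 : (\int[Pr]_w (R2 w - R3 w) = \int[Pr]_w R2 w - \int[Pr]_w R3 w)%E by apply: integralB.
apply: (@le_trans _ _ ((4 / mu)%:E * ((\int[Pr]_w R1 w - \int[Pr]_w R3 w) + (\int[Pr]_w R2 w - \int[Pr]_w R3 w)))%E).
  rewrite -eB1 -eB2 -eD -eI.
  by apply: le_int_nm => // w; apply: integral_ge0 => z _; rewrite lee_fin sqnorm_ge0.
have eR12b : (\int[Pr]_w R1 w = \int[Pr]_w R2 w)%E by exact: eR12.
rewrite -eR12b.
have fa := integrable_fin_num measurableT iR1.
have fb := integrable_fin_num measurableT iR3.
rewrite -(fineK fa) -(fineK fb) -!EFinB -EFinD -!EFinM lee_fin.
by rewrite le_eqVlt; apply/orP; left; apply/eqP; ring.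
Qed.
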